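(* Let $R_0^*\in SO(3)$ with unit quaternion representation $w_0^*\in\mathbb{S}^3$, let $1\le k^*<\ell$ (there is at least one outlier; $k^*$ may be such that the inlier set is $\{1,\dots,k^*\}$), let $(y_i,x_i)\in\mathbb{R}^3\times\mathbb{R}^3$ with $y_i=R_0^*x_i$ for $i=1,\dots,k^*$ (noiseless inliers) and $(y_j,x_j)$ arbitrary for $j=k^*+1,\dots,\ell$ (outliers), and let $c_1^2,\dots,c_\ell^2\ge0$. Let $\omega^*=[w_0^*;\dots;w_0^*;0;\dots;0]\in\mathbb{R}^{4(\ell+1)}$, where $w_0^*$ appears $k^*+1$ times followed by zero blocks, and $\mathcal{W}^*=\omega^*(\omega^* )^\top$. Then: (1) If $0<c_j^2<\lambda_{\min}(Q_j)$ for all $j=k^*+1,\dots,\ell$, then (SDR) is tight, admitting $\mathcal{W}^*$ as a global minimizer. (2) If $c_j^2>(w_0^* )^\top Q_jw_0^*$ for some $j\in\{k^*+1,\dots,\ell\}$, then $\mathcal{W}^*$ is not a global minimizer of (SDR).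
   Context: For $w=[w_1;w_2;w_3;w_4]\in\mathbb{S}^3$, $R(w)=\begin{bmatrix} w_1^2+w_2^2-w_3^2-w_4^2 & 2(w_2w_3-w_1w_4) & 2(w_2w_4+w_1w_3)\\ 2(w_2w_3+w_1w_4) & w_1^2+w_3^2-w_2^2-w_4^2 & 2(w_3w_4-w_1w_2)\\ 2(w_2w_4-w_1w_3) & 2(w_3w_4+w_1w_2) & w_1^2+w_4^2-w_2^2-w_3^2\end{bmatrix}\in SO(3)$; $\pm w$ are the unit quaternion representations of $R(w)$. $Q_i$ is the unique symmetric $4\times4$ matrix with $w^\top Q_iw=\|y_i-R(w)x_i\|_2^2$ for all $w\in\mathbb{S}^3$; $\lambda_{\min}$ is the smallest eigenvalue. For $\mathcal{A}\in\mathbb{R}^{4(\ell+1)\times4(\ell+1)}$, $[\mathcal{A}]_{ij}$ ($0\le i,j\le\ell$) is the $4\times4$ block in rows $4i+1..4i+4$, columns $4j+1..4j+4$. $\mathcal{Q}$ is symmetric with $[\mathcal{Q}]_{0i}=[\mathcal{Q}]_{i0}=\frac12(Q_i-c_i^2I_4)$ ($i\ge1$), other blocks zero. (QCQP): minimize $\operatorname{tr}(\mathcal{Q}\omega\omega^\top)+\sum_ic_i^2$ over $\omega\in\mathbb{R}^{4(\ell+1)}$ s.t. $[\omega\omega^\top]_{0i}=[\omega\omega^\top]_{ii}$ ($i=1..\ell$), $\operatorname{tr}([\omega\omega^\top]_{00})=1$. (SDR): minimize $\operatorname{tr}(\mathcal{Q}\mathcal{W})+\sum_ic_i^2$ over symmetric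 $\mathcal{W}\succeq0$ s.t. $[\mathcal{W}]_{0i}=[\mathcal{W}]_{ii}$ ($i=1..\ell$), $\operatorname{tr}([\mathcal{W}]_{00})=1$. (SDR) is tight if it admits $\hat\omega\hat\omega^\top$ as a global minimizer, where $\hat\omega$ is a global minimizer of (QCQP). *)

(* Defs.v *)
From HB Require Import structures.
From mathcomp Require Import all_boot all_order all_algebra.
From mathcomp Require Import classical_sets reals.
Set Implicit Arguments. Unset Strict Implicit. Unset Printing Implicit Defensive.
Import Order.TTheory GRing.Theory Num.Theory.
Local Open Scope ring_scope.

Section Defs.
Variable R : realType.

(* entry of a matrix at nat indices (0 if out of range) *)
Definition entry m n (A : 'M[R]_(m, n)) (a b : nat) : R :=
  match @insub nat (fun x => x < m)%N 'I_m a, @insub nat (fun x => x < n)%N 'I_n b with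
  | Some a', Some b' => A a' b'
  | _, _ => 0
  end.

(* [A]_{ij}: rows 4i+1..4i+4, columns 4j+1..4j+4 (0-based: 4i..4i+3) *)
Definition blk n (A : 'M[R]_n) (i j : nat) : 'M[R]_4 :=
  \matrix_(r < 4, s < 4) entry A (4 * i + r) (4 * j + s).

Definition sqnorm n (v : 'cV[R]_n) : R := (v^T *m v) 0 0.
Definition qform n (A : 'M[R]_n) (v : 'cV[R]_n) : R := (v^T *m A *m v) 0 0.

Definition unit_quat (w : 'cV[R]_4) : Prop := sqnorm w = 1.

Definition rotq (w : 'cV[R]_4) : 'M[R]_3 :=
  let w1 := w 0 0 in let w2 := w 1 0 in let w3 := w 2%:R 0 in let w4 := w 3%:R 0 in
  \matrix_(i < 3, j < 3) (nth [::]
   [:: [:: w1^+2 + w2^+2 - w3^+2 - w4^+2; 2 * (w2 * w3 - w1 * w4); 2 * (w2 * w4 + w1 * w3)];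
       [:: 2 * (w2 * w3 + w1 * w4); w1^+2 + w3^+2 - w2^+2 - w4^+2; 2 * (w3 * w4 - w1 * w2)];
       [:: 2 * (w2 * w4 - w1 * w3); 2 * (w3 * w4 + w1 * w2); w1^+2 + w4^+2 - w2^+2 - w3^+2]] i)`_j.

Definition psd n (A : 'M[R]_n) : Prop := forall v : 'cV[R]_n, 0 <= qform A v.

Definition lambda_min n (A : 'M[R]_n) : R := inf [set a : R | eigenvalue A a].

Definition omega_star (l k : nat) (w0 : 'cV[R]_4) : 'cV[R]_(4 * l.+1) :=
  \col_(a < 4 * l.+1) (if (a %/ 4 <= k)%N then entry w0 (a %% 4) 0 else 0).

Section Problems.
Variables (l : nat) (calQ : 'M[R]_(4 * l.+1)) (c2 : nat -> R).

Definition objective (W : 'M[R]_(4 * l.+1)) : R :=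
  \tr (calQ *m W) + \sum_(1 <= i < l.+1) c2 i.

Definition sdr_feasible (W : 'M[R]_(4 * l.+1)) : Prop :=
  W^T = W /\ psd W /\
  (forall i, (1 <= i <= l)%N -> blk W 0 i = blk W i i) /\
  \tr (blk W 0 0) = 1.

Definition qcqp_feasible (om : 'cV[R]_(4 * l.+1)) : Prop :=
  (forall i, (1 <= i <= l)%N -> blk (om *m om^T) 0 i = blk (om *m om^T) i i) /\
  \tr (blk (om *m om^T) 0 0) = 1.

Definition sdr_global_min (W : 'M[R]_(4 * l.+1)) : Prop :=
  sdr_feasible W /\ forall W', sdr_feasible W' -> objective W <= objective W'.

Definition qcqp_global_min (om : 'cV[R]_(4 * l.+1)) : Prop :=
  qcqp_feasible om /\
  forall om', qcqp_feasible om' -> objective (om *m om^T) <= objective (om' *m om'^T).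

Definition sdr_tight : Prop :=
  exists om, qcqp_global_min om /\ sdr_global_min (om *m om^T).
End Problems.
End Defs.

(* Main.v *)
Require Import Defs.
From HB Require Import structures.
From mathcomp Require Import all_boot all_order all_algebra.
From mathcomp Require Import classical_sets reals.
From mathcomp Require Import lra zify.
Import Order.TTheory GRing.Theory Num.Theory.
Set Implicit Arguments. Unset Strict Implicit. Unset Printing Implicit Defensive.
Local Open Scope ring_scope.

Lemma entry_ord (R : realType) m n (A : 'M[R]_(m, n)) (i : 'I_m) (j : 'I_n) :
  entry A i j = A i j.
Proof. by rewrite /entry !valK. Qed.

Lemma entry_outl (R : realType) m n (A : 'M[R]_(m, n)) a b :
  (m <= a)%N -> entry A a b = 0.
Proof. by move=> h; rewrite /entry insubF // ltnNge h. Qed.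

Lemma entry0 (R : realType) m n a b : entry (0 : 'M[R]_(m, n)) a b = 0.
Proof.
rewrite /entry; case: insubP => [a' _ _|_] //; case: insubP => [b' _ _|_] //.
by rewrite mxE.
Qed.

Lemma entry_tr (R : realType) n (A : 'M[R]_n) a b : entry A^T a b = entry A b a.
Proof.
rewrite /entry; case: insubP => [a' _ _|_] //; case: insubP => [b' _ _|_] //.
by rewrite mxE.
Qed.

Lemma blk_tr (R : realType) n (A : 'M[R]_n) p q : blk A^T p q = (blk A q p)^T.
Proof. by apply/matrixP => r s; rewrite !mxE entry_tr. Qed.

Lemma sum_split4 (R : realType) (F : nat -> R) L :
  \sum_(a < 4 * L) F a = \sum_(p < L) \sum_(r < 4) F (4 * p + r)%N.
Proof.
elim: L => [|L IH]; first by rewrite muln0 !big_ord0.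
rewrite [RHS]big_ord_recr /= -IH.
rewrite -(big_mkord xpredT F) -(big_mkord xpredT (fun a => F a)).
rewrite (big_cat_nat _ (n := (4 * L)%N)) /=; [|lia|lia].
congr (_ + _).
rewrite -(big_mkord xpredT (fun r => F (4 * L + r)%N)).
rewrite -{1}[(4 * L)%N]add0n big_addn.
have -> : (4 * L.+1 - 4 * L = 4)%N by lia.
by apply: eq_bigr => i _; rewrite addnC.
Qed.

Lemma trace_blocks (R : realType) L (A B : 'M[R]_(4 * L)) :
  \tr (A *m B) = \sum_(p < L) \sum_(q < L) \tr (blk A p q *m blk B q p).
Proof.
rewrite /mxtrace.
transitivity (\sum_(a < 4 * L) (fun a : nat => \sum_(b < 4 * L) (fun b : nat => entry A a b * entry B b a) b) a).
  by apply: eq_bigr => a _; rewrite mxE; apply: eq_bigr => b _; rewrite !entry_ord.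
rewrite (sum_split4 (fun a : nat => \sum_(b < 4 * L) entry A a b * entry B b a)); apply: eq_bigr => p _.
under eq_bigr do rewrite (sum_split4 (fun b : nat => entry A _ b * entry B b _)).
rewrite exchange_big; apply: eq_bigr => q _.
by apply: eq_bigr => r _; rewrite !mxE; apply: eq_bigr => s _; rewrite !mxE.
Qed.

Lemma entry_mk (R : realType) m n (A : 'M[R]_(m, n)) a b (ha : (a < m)%N) (hb : (b < n)%N) :
  entry A a b = A (Ordinal ha) (Ordinal hb).
Proof. by rewrite -(entry_ord A (Ordinal ha)). Qed.

Definition stack (R : realType) L (v : nat -> 'cV[R]_4) : 'cV[R]_(4 * L) :=
  \col_(a < 4 * L) entry (v (a %/ 4)%N) (a %% 4)%N 0.

Definition bil (R : realType) n (M : 'M[R]_n) (u w : 'cV[R]_n) : R := (u^T *m M *m w) 0 0.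

Lemma div4 p (r : 'I_4) : ((4 * p + r) %/ 4 = p)%N.
Proof. by rewrite mulnC divnMDl // divn_small // addn0. Qed.
Lemma mod4 p (r : 'I_4) : ((4 * p + r) %% 4 = r)%N.
Proof. by rewrite mulnC modnMDl modn_small. Qed.

Lemma stack_at (R : realType) L (v : nat -> 'cV[R]_4) p (r : 'I_4) (h : (4 * p + r < 4 * L)%N) :
  stack L v (Ordinal h) 0 = v p r 0.
Proof.
rewrite /stack mxE /=.
have -> : ((4 * p + r) %/ 4 = p)%N by rewrite mulnC divnMDl // divn_small // addn0.
have -> : ((4 * p + r) %% 4 = r)%N by rewrite mulnC modnMDl modn_small.
by rewrite (entry_ord _ r ord0).
Qed.

Lemma blk_outer (R : realType) L (v : nat -> 'cV[R]_4) p q :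
  (p < L)%N -> (q < L)%N ->
  blk (stack L v *m (stack L v)^T) p q = v p *m (v q)^T.
Proof.
move=> hp hq; apply/matrixP => r s; rewrite !mxE.
have hr : (4 * p + r < 4 * L)%N by have := ltn_ord r; lia.
have hs : (4 * q + s < 4 * L)%N by have := ltn_ord s; lia.
rewrite (entry_mk _ hr hs) !mxE !big_ord1 !mxE.
by rewrite /= !div4 !mod4 !(entry_ord _ _ ord0).
Qed.

Lemma tr1 (R : realType) (M : 'M[R]_1) : \tr M = M 0 0.
Proof. by rewrite /mxtrace big_ord1. Qed.

Lemma qform_tr (R : realType) n (W : 'M[R]_n) z : qform W z = \tr (W *m (z *m z^T)).
Proof. by rewrite /qform mulmxA mxtrace_mulC mulmxA tr1. Qed.

Lemma qform_stack (R : realType) L (W : 'M[R]_(4 * L)) v :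
  qform W (stack L v) = \sum_(p < L) \sum_(q < L) bil (blk W p q) (v p) (v q).
Proof.
rewrite qform_tr trace_blocks; apply: eq_bigr => p _; apply: eq_bigr => q _.
by rewrite blk_outer // /bil mulmxA mxtrace_mulC mulmxA tr1.
Qed.



Lemma disc (R : realType) (a b c : R) : 0 <= c ->
  (forall t, 0 <= a + 2 * b * t + c * t ^+ 2) -> b ^+ 2 <= a * c.
Proof.
move=> c0 H.
case: (ltrgtP c 0) => hc; first by move: c0; rewrite leNgt hc.
- pose t := - b / c; have ht : c * t = - b by rewrite /t mulrCA divff ?mulr1 // gt_eqF.
  have := H t; move: ht; nra.
- rewrite hc mulr0; case: (eqVneq b 0) => [->|hb]; first by rewrite expr0n.
  pose t := - (a + 1) / (2 * b).
  have ht : 2 * b * t = - (a + 1) by rewrite /t mulrCA divff ?mulr1 // mulf_neq0 // pnatr_eq0.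
  have := H t; rewrite hc mul0r addr0 ht; lra.
Qed.

Lemma bil_scale (R : realType) n (M : 'M[R]_n) a b u w :
  bil M (a *: u) (b *: w) = a * b * bil M u w.
Proof.
rewrite /bil linearZ /= (_ : (a *: u)^T = a *: u^T); last by rewrite linearZ.
by rewrite -!scalemxAl !mxE mulrA [b * a]mulrC.
Qed.

Lemma bilC (R : realType) n (M : 'M[R]_n) u w : M^T = M -> bil M u w = bil M w u.
Proof.
move=> hM; rewrite /bil; transitivity ((u^T *m M *m w)^T 0 0); first by rewrite [RHS]mxE.
by rewrite !trmx_mul trmxK hM mulmxA.
Qed.

Lemma bilDl (R : realType) n (M : 'M[R]_n) u v w : bil M (u + v) w = bil M u w + bil M v w.
Proof. by rewrite /bil linearD /= !mulmxDl mxE. Qed.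

Lemma bilDr (R : realType) n (M : 'M[R]_n) u v w : bil M u (v + w) = bil M u v + bil M u w.
Proof. by rewrite /bil !mulmxDr mxE. Qed.

Lemma qform_bil (R : realType) n (M : 'M[R]_n) v : qform M v = bil M v v.
Proof. by []. Qed.

Lemma qform_scale (R : realType) n (M : 'M[R]_n) t v : qform M (t *: v) = t ^+ 2 * qform M v.
Proof. by rewrite !qform_bil bil_scale expr2. Qed.

Lemma bil_scalel (R : realType) n (M : 'M[R]_n) a u w : bil M (a *: u) w = a * bil M u w.
Proof. by rewrite -{1}[w]scale1r bil_scale mulr1. Qed.
Lemma bil_scaler (R : realType) n (M : 'M[R]_n) b u w : bil M u (b *: w) = b * bil M u w.
Proof. by rewrite -{1}[u]scale1r bil_scale mul1r. Qed.

Lemma CS (R : realType) n (M : 'M[R]_n) u w : M^T = M -> psd M ->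
  bil M u w ^+ 2 <= qform M u * qform M w.
Proof.
move=> hs hp; rewrite mulrC; apply: disc; first exact: hp.
move=> t; have := hp (w + t *: u).
rewrite qform_bil bilDl !bilDr bil_scalel !bil_scaler bil_scalel (bilC w u hs) !qform_bil.
move=> h; lra.
Qed.

Lemma bil_delta (R : realType) n (A : 'M[R]_n) i j :
  bil A (delta_mx i 0) (delta_mx j 0) = A i j.
Proof. by rewrite /bil trmx_delta -rowE -colE !mxE. Qed.

Lemma symE (R : realType) n (A : 'M[R]_n) i j : A^T = A -> A i j = A j i.
Proof. by move=> hs; rewrite -{1}hs mxE. Qed.

Lemma psd_diag (R : realType) n (A : 'M[R]_n) i : psd A -> 0 <= A i i.
Proof. by move=> hp; have := hp (delta_mx i 0); rewrite qform_bil bil_delta. Qed.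

Lemma psd_row0 (R : realType) n (A : 'M[R]_n) i j : A^T = A -> psd A ->
  A i i = 0 -> A i j = 0.
Proof.
move=> hs hp h0; have := CS (delta_mx i 0) (delta_mx j 0) hs hp.
rewrite !qform_bil !bil_delta h0 mul0r => h.
by apply/eqP; rewrite -sqrf_eq0 eq_le h sqr_ge0.
Qed.

Lemma outer_bil (R : realType) n (A : 'M[R]_n) i0 v : A^T = A ->
  bil (col i0 A *m (col i0 A)^T) v v = bil A (delta_mx i0 0) v ^+ 2.
Proof.
move=> hs.
have e1 : ((col i0 A)^T *m v) 0 0 = bil A (delta_mx i0 0) v.
  by rewrite colE trmx_mul hs /bil trmx_delta.
have e2 : (v^T *m col i0 A) 0 0 = bil A (delta_mx i0 0) v.
  rewrite -e1; transitivity ((v^T *m col i0 A)^T 0 0); first by rewrite [RHS]mxE.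
  by rewrite trmx_mul trmxK.
by rewrite [LHS]/bil !mulmxA -mulmxA [LHS]mxE big_ord1 e2 e1 expr2.
Qed.

Lemma psd_tr_aux (R : realType) n (B : 'M[R]_n) : psd B -> forall k (A : 'M[R]_n),
  A^T = A -> psd A ->
  (forall i j : 'I_n, ((i < n - k) || (j < n - k))%N -> A i j = 0) ->
  0 <= \tr (A *m B).
Proof.
move=> hB; elim => [|k IH] A hs hp hz.
  have -> : A = 0 by apply/matrixP => i j; rewrite mxE hz // subn0 ltn_ord.
  by rewrite mul0mx linear0.
case: (leqP n k) => hnk.
  apply: IH => // i j hij; apply: hz; have h1 : (n - k.+1 = n - k)%N by lia.
  by rewrite h1.
have hm : (n - k.+1 < n)%N by lia.
pose i0 := Ordinal hm.
have hm1 : forall i : 'I_n, (i < n - k)%N = (i < n - k.+1)%N || (i == i0).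
  move=> i; apply/idP/idP.
    move=> h; case: (ltnP i (n - k.+1)) => //= h2; apply/eqP/val_inj => /=; lia.
  by case/orP => [|/eqP ->] /=; lia.
case: (eqVneq (A i0 i0) 0) => ha.
  apply: IH => // i j; rewrite !hm1.
  case/orP => /orP[|/eqP->]; first by move=> h; apply: hz; rewrite h.
  - by apply: psd_row0.
  - by move=> h; apply: hz; rewrite h orbT.
  - by rewrite symE //; apply: psd_row0.
have a0 : 0 < A i0 i0 by rewrite lt_def ha psd_diag.
pose u := col i0 A.
pose A' := A - (A i0 i0)^-1 *: (u *m u^T).
have hA : A = A' + (A i0 i0)^-1 *: (u *m u^T) by rewrite subrK.
rewrite hA mulmxDl linearD /= -scalemxAl linearZ /=.
apply: addr_ge0.
  apply: IH.
  - by rewrite /A' linearB /= linearZ /= trmx_mul trmxK hs.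
  - move=> v; rewrite /A' /qform mulmxBr mulmxBl mxE -/(qform A v).
    rewrite -scalemxAr -scalemxAl mxE [X in _ - X]mxE -/(bil _ v v) outer_bil //.
    have := CS (delta_mx i0 0) v hs hp; rewrite qform_bil bil_delta.
    set b := bil _ _ _; set q := qform A v => h.
    have hi : A i0 i0 * (A i0 i0)^-1 = 1 by rewrite divff.
    have hi0 : 0 < (A i0 i0)^-1 by rewrite invr_gt0.
    move: hi hi0 h a0; set a := A i0 i0; set ai := a^-1; nra.
  - move=> i j; rewrite !hm1 /A' !mxE big_ord1 !mxE.
    case/orP => /orP[h|/eqP->].
    + by rewrite (hz i j) ?h // (hz i i0) ?h // mul0r mulr0 subrr.
    + by rewrite mulrA mulVf ?mul1r // (symE j i0 hs) subrr.
    + by rewrite (hz i j) ?h ?orbT // (hz j i0) ?h // mulr0 mulr0 subrr.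
    + by rewrite mulrCA mulVf ?mulr1 ?subrr.
apply: mulr_ge0; first by rewrite invr_ge0 ltW.
by rewrite -mulmxA mxtrace_mulC tr1; apply: hB.
Qed.

Lemma psd_tr (R : realType) n (A B : 'M[R]_n) :
  A^T = A -> psd A -> psd B -> 0 <= \tr (A *m B).
Proof.
move=> hs hA hB; apply: (psd_tr_aux hB (k := n)) => // i j.
by rewrite subnn.
Qed.



Lemma sqnorm_qform (R : realType) n (v : 'cV[R]_n) : sqnorm v = qform 1%:M v.
Proof. by rewrite /qform /sqnorm mulmx1. Qed.

Lemma sqnormE (R : realType) n (v : 'cV[R]_n) : sqnorm v = \sum_i v i 0 ^+ 2.
Proof. by rewrite /sqnorm mxE; apply: eq_bigr => i _; rewrite mxE expr2. Qed.

Lemma sqnorm_ge0 (R : realType) n (v : 'cV[R]_n) : 0 <= sqnorm v.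
Proof. by rewrite sqnormE sumr_ge0 // => i _; rewrite sqr_ge0. Qed.

Lemma sqnorm_eq0 (R : realType) n (v : 'cV[R]_n) : sqnorm v = 0 -> v = 0.
Proof.
rewrite sqnormE => h; apply/matrixP => i j; rewrite ord1 mxE.
by apply/eqP; rewrite -sqrf_eq0; apply/eqP; apply: (psumr_eq0P _ h) => // k _; rewrite sqr_ge0.
Qed.

Lemma sqnorm_gt0 (R : realType) n (v : 'cV[R]_n) : v != 0 -> 0 < sqnorm v.
Proof.
move=> hv; rewrite lt_def sqnorm_ge0 andbT; apply/eqP => h.
by move: hv; rewrite (sqnorm_eq0 h) eqxx.
Qed.

Lemma sqnorm_scale (R : realType) n t (v : 'cV[R]_n) : sqnorm (t *: v) = t ^+ 2 * sqnorm v.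
Proof. by rewrite !sqnorm_qform qform_scale. Qed.

Lemma psd1 (R : realType) n : psd (1%:M : 'M[R]_n).
Proof. by move=> v; rewrite -sqnorm_qform sqnorm_ge0. Qed.

Lemma unit_decomp (R : realType) n (v : 'cV[R]_n) : v != 0 ->
  exists t u, 0 < t /\ sqnorm u = 1 /\ v = t *: u.
Proof.
move=> hv; have s0 := sqnorm_gt0 hv.
pose t := Num.sqrt (sqnorm v).
have t0 : 0 < t by rewrite sqrtr_gt0.
exists t, (t^-1 *: v); split => //; split.
  by rewrite sqnorm_scale exprVn sqr_sqrtr ?ltW // mulVf // gt_eqF.
by rewrite scalerA divff ?scale1r // gt_eqF.
Qed.

Lemma qform0 (R : realType) n (M : 'M[R]_n) : qform M 0 = 0.
Proof. by rewrite -(scale0r (0 : 'cV[R]_n)) qform_scale expr0n mul0r. Qed.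

Lemma psd_of_unit (R : realType) n (A : 'M[R]_n) :
  (forall w, sqnorm w = 1 -> 0 <= qform A w) -> psd A.
Proof.
move=> h v; case: (eqVneq v 0) => [->|hv]; first by rewrite qform0.
have [t [u [t0 [hu ->]]]] := unit_decomp hv.
by rewrite qform_scale mulr_ge0 ?sqr_ge0 ?h.
Qed.

Lemma qformB (R : realType) n (A B : 'M[R]_n) v : qform (A - B) v = qform A v - qform B v.
Proof. by rewrite /qform mulmxBr mulmxBl mxE [X in _ + X]mxE. Qed.

Lemma qform_scalar (R : realType) n (a : R) (v : 'cV[R]_n) : qform a%:M v = a * sqnorm v.
Proof. by rewrite /qform mul_mx_scalar -scalemxAl mxE. Qed.

Lemma sq_le_sqnorm (R : realType) n (v : 'cV[R]_n) i : v i 0 ^+ 2 <= sqnorm v.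
Proof.
rewrite sqnormE (bigD1 i) //= lerDl sumr_ge0 // => k _; by rewrite sqr_ge0.
Qed.

Definition Kb (R : realType) n (M : 'M[R]_n) : R := \sum_i \sum_j `|M i j|.

Lemma Kb_ge0 (R : realType) n (M : 'M[R]_n) : 0 <= Kb M.
Proof. by rewrite /Kb sumr_ge0 // => i _; rewrite sumr_ge0. Qed.

Lemma qform_bound (R : realType) n (M : 'M[R]_n) v : qform M v <= Kb M * sqnorm v.
Proof.
have -> : qform M v = \sum_i \sum_j (v i 0 * M i j * v j 0).
  rewrite /qform mxE exchange_big /=; apply: eq_bigr => j _.
  rewrite mxE mulr_suml; apply: eq_bigr => i _; by rewrite mxE.
rewrite /Kb mulr_suml; apply: ler_sum => i _; rewrite mulr_suml; apply: ler_sum => j _.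
have hi := sq_le_sqnorm v i; have hj := sq_le_sqnorm v j.
set a := v i 0 in hi *; set b := v j 0 in hj *; set m := M i j.
apply: (le_trans (ler_norm _)); rewrite !normrM.
have ha := real_normK (num_real a); have hb := real_normK (num_real b).
have := normr_ge0 a; have := normr_ge0 b; have := normr_ge0 m.
rewrite -ha in hi; rewrite -hb in hj.
set A := `|a| in hi *; set B := `|b| in hj *; set N := `|m|; set S := sqnorm v in hi hj *.
move=> hN hB hA.
have hAB : A * B <= S by nra.
have : 0 <= N * (S - A * B) by rewrite mulr_ge0 // subr_ge0.
lra.
Qed.

Lemma lmin_psd (R : realType) n (Q : 'M[R]_n.+1) c :
  Q^T = Q -> psd Q -> c < lambda_min Q -> psd (Q - c%:M).
Proof.
move=> hs hp hc.
pose S := [set x : R | exists v, sqnorm v = 1 /\ x = qform Q v]%classic.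
have e0 : sqnorm (delta_mx 0 0 : 'cV[R]_n.+1) = 1.
  by rewrite sqnorm_qform qform_bil bil_delta mxE.
have hS0 : (S !=set0)%classic by exists (qform Q (delta_mx 0 0)), (delta_mx 0 0).
have hSl : has_lbound S by exists 0 => x [v [_ ->]]; exact: hp.
pose m := inf S.
have h1 : forall v, m * sqnorm v <= qform Q v.
  move=> v; case: (eqVneq v 0) => [->|hv].
    by rewrite qform0 sqnorm_qform qform0 mulr0.
  have [t [u [t0 [hu ->]]]] := unit_decomp hv.
  rewrite qform_scale sqnorm_scale hu mulr1 mulrC ler_wpM2l ?sqr_ge0 //.
  by apply: (ge_inf hSl); exists u.
pose P := Q - m%:M.
have hPs : P^T = P by rewrite /P linearB /= hs tr_scalar_mx.
have hPp : psd P by move=> v; rewrite /P qformB qform_scalar subr_ge0.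
have hdet : \det P = 0.
  apply/eqP; apply: contraT => hd.
  have hu : P \in unitmx by rewrite unitmxE unitfE.
  pose Pi := invmx P.
  pose K := Kb Pi^T + 1.
  have K0 : 0 < K by have := Kb_ge0 Pi^T; rewrite /K; lra.
  have hlb : lbound S (m + K^-1).
    move=> x [v [hv ->]].
    have e1 : bil P v (Pi *m v) = 1.
      by rewrite /bil mulmxA -(mulmxA (v^T) P Pi) mulmxV // mulmx1.
    have e2 : qform P (Pi *m v) = qform Pi^T v.
      by rewrite /qform trmx_mul -!mulmxA (mulmxA P) mulmxV // mul1mx mulmxA.
    have := CS v (Pi *m v) hPs hPp; rewrite e1 e2 expr1n => hcs.
    have hb := qform_bound Pi^T v; rewrite hv mulr1 in hb.
    have hq : 0 <= qform P v := hPp v.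
    have -> : qform Q v = qform P v + m.
      by rewrite /P qformB qform_scalar hv mulr1 subrK.
    have hKi : K * K^-1 = 1 by rewrite divff // gt_eqF.
    have hKi0 : 0 < K^-1 by rewrite invr_gt0.
    move: hKi hKi0 hcs hb hq; rewrite -/K.
    set Ki := K^-1; set qP := qform P v; set qI := qform _ v.
    have : Kb Pi^T = K - 1 by rewrite /K addrK.
    move=> ->; nra.
  have := lb_le_inf hS0 hlb; rewrite -/m.
  have : 0 < K^-1 by rewrite invr_gt0.
  lra.
have hE : eigenvalue Q m.
  move/eqP: hdet => /det0P [v hv0 hvP]; apply/eigenvalueP; exists v => //.
  by move: hvP; rewrite /P mulmxBr mul_mx_scalar => /eqP; rewrite subr_eq0 => /eqP.
have hElb : lbound [set a : R | eigenvalue Q a]%classic m.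
  move=> a /eigenvalueP [v hv hv0].
  have hz : v^T != 0 by rewrite trmx_eq0.
  have := h1 v^T.
  have -> : qform Q v^T = a * sqnorm v^T.
    by rewrite /qform /sqnorm trmxK hv -scalemxAl mxE.
  have := sqnorm_gt0 hz; set s := sqnorm _ => hs0 h.
  by rewrite -(ler_pM2r hs0).
have hlm : lambda_min Q <= m by apply: ge_inf => //; exists m.
move=> v; rewrite qformB qform_scalar.
have := h1 v; have := sqnorm_ge0 v; set s := sqnorm v => hs0 hm.
have : c <= m by apply: (le_trans (ltW hc)).
nra.
Qed.



Lemma sum_delta (R : realType) L (F : nat -> R) i : (i < L)%N ->
  \sum_(p < L) ((p : nat) == i)%:R * F p = F i.
Proof.
move=> h; rewrite (bigD1 (Ordinal h)) //= eqxx mul1r big1 ?addr0 // => p hp.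
suff -> : ((p : nat) == i) = false by rewrite mul0r.
by apply/negbTE; move: hp; apply: contra => /eqP e; apply/eqP/val_inj.
Qed.

Lemma sum_delta2 (R : realType) L (F : nat -> R) a b : (a < L)%N -> (b < L)%N ->
  \sum_(p < L) (((p : nat) == a)%:R - ((p : nat) == b)%:R) * F p = F a - F b.
Proof.
move=> ha hb; rewrite (eq_bigr (fun p : 'I_L => ((p : nat) == a)%:R * F p - ((p : nat) == b)%:R * F p)).
  by rewrite sumrB !sum_delta.
by move=> p _; rewrite mulrBl.
Qed.

Lemma blk_sym (R : realType) n (W : 'M[R]_n) p q : W^T = W -> (blk W p q)^T = blk W q p.
Proof. by move=> hs; rewrite -blk_tr hs. Qed.

Lemma qform_tr_mx (R : realType) n (M : 'M[R]_n) u : qform M^T u = qform M u.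
Proof.
rewrite /qform; transitivity ((u^T *m M^T *m u)^T 0 0); first by rewrite [RHS]mxE.
by rewrite !trmx_mul !trmxK mulmxA.
Qed.

Lemma tr_scalar (R : realType) n (X D : 'M[R]_n) c :
  \tr ((X - c%:M) *m D) = \tr (X *m D) - c * \tr D.
Proof. by rewrite mulmxBl linearB /= mul_scalar_mx linearZ. Qed.

Definition term (R : realType) (Q : nat -> 'M[R]_4) (c2 : nat -> R) n (W : 'M[R]_n) i :=
  \tr ((Q i - (c2 i)%:M) *m blk W i i) + c2 i.

Lemma objective_blocks (R : realType) l (calQ : 'M[R]_(4 * l.+1)) (c2 : nat -> R)
  (Q : nat -> 'M[R]_4) (W : 'M[R]_(4 * l.+1)) :
  (forall i, (1 <= i <= l)%N ->
     blk calQ 0 i = 2^-1 *: (Q i - (c2 i)%:M) /\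
     blk calQ i 0 = 2^-1 *: (Q i - (c2 i)%:M)) ->
  (blk calQ 0 0 = 0 /\
   forall i j, (1 <= i <= l)%N -> (1 <= j <= l)%N -> blk calQ i j = 0) ->
  W^T = W -> (forall i, (1 <= i <= l)%N -> blk W 0 i = blk W i i) ->
  objective calQ c2 W = \sum_(i < l) term Q c2 W i.+1.
Proof.
move=> hQ [h00 hij] hs hW.
rewrite /objective trace_blocks big_ord_recl big_ord_recl /= h00 mul0mx linear0 add0r.
rewrite big_add1 /= big_mkord -big_split -big_split /=.
apply: eq_bigr => i _.
have hi : (1 <= i.+1 <= l)%N by have := ltn_ord i; lia.
rewrite [\sum_(q < l.+1) _]big_ord_recl big1 ?addr0; last first.
  move=> q _; have hq : (1 <= (lift ord0 q : nat) <= l)%N.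
    by rewrite /= /bump /= add1n; have := ltn_ord q; lia.
  by rewrite /bump /= add1n hij ?mul0mx ?linear0.
rewrite /bump /= !add1n.
have [e1 e2] := hQ _ hi.
rewrite e1 e2 -(blk_sym _ _ hs) hW // blk_sym // /term.
rewrite -!scalemxAl !linearZ /=.
set t := \tr _; lra.
Qed.

Lemma sum2 (R : realType) L (a : nat -> R) (X : nat -> nat -> R) :
  \sum_(p < L) \sum_(q < L) a p * a q * X p q =
  \sum_(p < L) a p * (\sum_(q < L) a q * X p q).
Proof.
by apply: eq_bigr => p _; rewrite mulr_sumr; apply: eq_bigr => q _; rewrite mulrA.
Qed.

Lemma feas_blk (R : realType) l (W : 'M[R]_(4 * l.+1)) i :
  sdr_feasible W -> (1 <= i <= l)%N -> psd (blk W i i) /\ \tr (blk W i i) <= 1.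
Proof.
move=> [hs [hp [hb htr]]] hi.
have hil : (i < l.+1)%N by lia.
have key : forall (a : nat -> R) u, qform W (stack l.+1 (fun p => a p *: u)) =
   \sum_(p < l.+1) a p * (\sum_(q < l.+1) a q * qform (blk W p q) u).
  move=> a u; rewrite qform_stack -(@sum2 R l.+1 a (fun p q => qform (blk W p q) u)).
  by apply: eq_bigr => p _; apply: eq_bigr => q _; rewrite bil_scale.
have hD : psd (blk W i i).
  move=> u; have := hp (stack l.+1 (fun p => (p == i)%:R *: u)); rewrite key.
  under eq_bigr do rewrite (sum_delta (fun q => qform (blk W _ q) u) hil).
  by rewrite (sum_delta (fun p => qform (blk W p i) u) hil).
split => //.
have hA : psd (blk W 0 0 - blk W i i).
  move=> u; have := hp (stack l.+1 (fun p => ((p == 0%N)%:R - (p == i)%:R) *: u)).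
  rewrite key.
  under eq_bigr do rewrite (sum_delta2 (fun q => qform (blk W _ q) u)) //.
  rewrite (sum_delta2 (fun p => qform (blk W p 0) u - qform (blk W p i) u)) //.
  rewrite qformB -(@blk_sym R _ W 0 i hs) qform_tr_mx hb //.
  set a := qform _ u; set b := qform _ u; lra.
have hsA : (blk W 0 0 - blk W i i)^T = blk W 0 0 - blk W i i.
  by rewrite linearB /= !blk_sym.
have := psd_tr hsA hA (@psd1 R 4).
by rewrite mulmx1 linearB /= htr subr_ge0.
Qed.

Lemma outer_sym_psd (R : realType) n (z : 'cV[R]_n) :
  (z *m z^T)^T = z *m z^T /\ psd (z *m z^T).
Proof.
split; first by rewrite trmx_mul trmxK.
move=> u; rewrite /qform !mulmxA -mulmxA mxE big_ord1.
have -> : (u^T *m z) 0 0 = (z^T *m u) 0 0.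
  by rewrite !mxE; apply: eq_bigr => k _; rewrite !mxE mulrC.
by rewrite -expr2 sqr_ge0.
Qed.

Lemma sdr_of_qcqp (R : realType) l (om : 'cV[R]_(4 * l.+1)) :
  qcqp_feasible om -> sdr_feasible (om *m om^T).
Proof. by move=> [h1 h2]; have [hs hp] := outer_sym_psd om. Qed.

Lemma outer_feasible (R : realType) l (v : nat -> 'cV[R]_4) :
  sqnorm (v 0%N) = 1 -> (forall i, (1 <= i <= l)%N -> v i = v 0%N \/ v i = 0) ->
  sdr_feasible (stack l.+1 v *m (stack l.+1 v)^T).
Proof.
move=> h0 hv; have [hs hp] := outer_sym_psd (stack l.+1 v).
split => //; split => //; split.
  move=> i hi; have hil : (i < l.+1)%N by lia.
  rewrite !blk_outer //; case: (hv i hi) => ->; first by [].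
  by rewrite trmx0 mulmx0 mul0mx.
by rewrite blk_outer // mxtrace_mulC tr1.
Qed.

Lemma term_outer (R : realType) (Q : nat -> 'M[R]_4) c2 l (v : nat -> 'cV[R]_4) i :
  (i < l.+1)%N ->
  term Q c2 (stack l.+1 v *m (stack l.+1 v)^T) i = qform (Q i - (c2 i)%:M) (v i) + c2 i.
Proof. by move=> hi; rewrite /term blk_outer // -qform_tr. Qed.

Unset Implicit Arguments.
Theorem theorem3p2 (R : realType) (l k : nat) (w0 : 'cV[R]_4)
  (y x : nat -> 'cV[R]_3) (c2 : nat -> R) (Q : nat -> 'M[R]_4)
  (calQ : 'M[R]_(4 * l.+1)) :
  unit_quat w0 ->
  (1 <= k)%N -> (k < l)%N ->
  (forall i, (1 <= i <= k)%N -> y i = rotq w0 *m x i) ->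
  (forall i, (1 <= i <= l)%N -> 0 <= c2 i) ->
  (forall i, (1 <= i <= l)%N ->
     (Q i)^T = Q i /\
     forall w : 'cV[R]_4, unit_quat w ->
       qform (Q i) w = sqnorm (y i - rotq w *m x i)) ->
  calQ^T = calQ ->
  (forall i, (1 <= i <= l)%N ->
     blk calQ 0 i = 2^-1 *: (Q i - (c2 i)%:M) /\
     blk calQ i 0 = 2^-1 *: (Q i - (c2 i)%:M)) ->
  (blk calQ 0 0 = 0 /\
   forall i j, (1 <= i <= l)%N -> (1 <= j <= l)%N -> blk calQ i j = 0) ->
  let Wstar := omega_star l k w0 *m (omega_star l k w0)^T in
  ((forall j, (k < j <= l)%N -> 0 < c2 j < lambda_min (Q j)) ->
     sdr_global_min calQ c2 Wstar /\ sdr_tight calQ c2)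
  /\
  ((exists j, (k < j <= l)%N /\ qform (Q j) w0 < c2 j) ->
     ~ sdr_global_min calQ c2 Wstar).
Proof.
move=> hw0 hk1 hkl hy hc hQ hcs hQb hQ0 Wstar.
pose vs := fun p : nat => if (p <= k)%N then w0 else 0.
have hom : omega_star l k w0 = stack l.+1 vs.
  by apply/matrixP => a b; rewrite !mxE /vs; case: ifP => _ //; rewrite entry0.
have hWs : Wstar = stack l.+1 vs *m (stack l.+1 vs)^T by rewrite /Wstar hom.
have hQsym : forall i, (1 <= i <= l)%N -> (Q i)^T = Q i := fun i hi => (hQ i hi).1.
have hQpsd : forall i, (1 <= i <= l)%N -> psd (Q i).
  move=> i hi; apply: psd_of_unit => w hw; rewrite (hQ i hi).2 //; exact: sqnorm_ge0.
have hin : forall i, (1 <= i <= k)%N -> qform (Q i) w0 = 0.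
  move=> i hi; have hil : (1 <= i <= l)%N by lia.
  by rewrite (hQ i hil).2 // hy // subrr sqnorm_qform qform0.
have feasS : sdr_feasible Wstar.
  rewrite hWs; apply: outer_feasible; first by rewrite /vs leq0n.
  by move=> i hi; rewrite /vs; case: ifP => _; [left|right].
have objS : forall W, sdr_feasible W -> objective calQ c2 W = \sum_(i < l) term Q c2 W i.+1.
  by move=> W [hs [_ [hb _]]]; exact: objective_blocks.
have termS : forall i, (i < l)%N ->
    term Q c2 Wstar i.+1 = if (i.+1 <= k)%N then 0 else c2 i.+1.
  move=> i hi; rewrite hWs term_outer; last by lia.
  rewrite /vs; case: ifP => hik.
    rewrite qformB qform_scalar hw0 hin; last by lia.
    lra.
  by rewrite qform0 add0r.
split.
  move=> hout.
  have minS : forall W', sdr_feasible W' ->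
      objective calQ c2 Wstar <= objective calQ c2 W'.
    move=> W' hW'; rewrite (objS _ feasS) (objS _ hW'); apply: ler_sum => i _.
    have hi : (1 <= i.+1 <= l)%N by have := ltn_ord i; lia.
    have [hDp hDt] := feas_blk hW' hi.
    rewrite termS ?ltn_ord // /term; case: ifP => hik.
      rewrite tr_scalar.
      have := psd_tr (hQsym _ hi) (hQpsd _ hi) hDp; have := hc _ hi.
      set D := \tr (blk W' _ _); set t := \tr (_ *m _); nra.
    have hj : (k < i.+1 <= l)%N by move: hik hi => /negbT; rewrite -ltnNge; lia.
    have /andP [c0 clt] := hout _ hj.
    have hP := lmin_psd (hQsym _ hi) (hQpsd _ hi) clt.
    have hsym : (Q i.+1 - (c2 i.+1)%:M)^T = Q i.+1 - (c2 i.+1)%:M.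
      by rewrite linearB /= tr_scalar_mx hQsym.
    have := psd_tr hsym hP hDp; lra.
  split; first by split.
  exists (omega_star l k w0); split; last by split.
  split; first by have [_ [_ [h1 h2]]] := feasS; split.
  by move=> om' hom'; apply: minS; exact: sdr_of_qcqp.
move=> [j [hj hlt]] [_ hmin].
pose v' := fun p : nat => if (p <= k)%N || (p == j) then w0 else 0.
pose W' := stack l.+1 v' *m (stack l.+1 v')^T.
have feas' : sdr_feasible W'.
  apply: outer_feasible; first by rewrite /v' leq0n.
  by move=> i hi; rewrite /v'; case: ifP => _; [left|right].
have := hmin W' feas'; rewrite (objS _ feasS) (objS _ feas').
have hj1 : (j.-1 < l)%N by lia.
pose d := c2 j - qform (Q j) w0.
have -> : \sum_(i < l) term Q c2 W' i.+1 =
    \sum_(i < l) (term Q c2 Wstar i.+1 - ((i : nat) == j.-1)%:R * d).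
  apply: eq_bigr => i _; rewrite termS // /W' term_outer; last by have := ltn_ord i; lia.
  rewrite /v'; case: (eqVneq (i : nat) j.-1) => hij.
    have ej : i.+1 = j by lia.
    rewrite mul1r ej eqxx orbT (_ : (j <= k)%N = false); last by lia.
    rewrite qformB qform_scalar hw0 /d; lra.
  have -> : (i.+1 == j) = false by apply/eqP; lia.
  rewrite orbF mul0r subr0; case: ifP => hik.
    rewrite qformB qform_scalar hw0 hin; last by lia.
    lra.
  by rewrite qform0 add0r.
rewrite sumrB (sum_delta (fun _ => d) hj1).
have : 0 < d by rewrite /d subr_gt0.
lra.
Qed.
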